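(* Suppose $r_{\min}<1$ and $\eta>\frac{r_{\min}}2$, and let $\underline\omega_\eta=\min\{\omega_i:r_i<2\eta\}$. For any constant $\varepsilon>0$ let $c_\varepsilon=\min\big\{\frac{n\eta}{(n-1)\underline\omega_\eta}-\varepsilon,\ n\eta-\varepsilon,\ 1\big\}$. Then the set $E_{c_\varepsilon}=\{(x_1,\dots,x_n)\in[0,1]^n:\max_{i,j\in\mathcal V}|x_i-x_j|\ge c_\varepsilon\}$ is finite-time robustly reachable from $[0,1]^n$ under control protocol (C3).
   Context: Fix $n\ge3$, $\mathcal V=\{1,\dots,n\}$, confidence thresholds $r_i\in(0,1]$, $r_{\min}=\min_ir_i$, belief factors $\omega_i\in(0,1)$, $\eta>0$. States $x(t)\in[0,1]^n$. Neighbor set $\mathcal N_i(t)=\{j:|x_j(t)-x_i(t)|\le r_i\}$ (contains $i$), $\Pi_{[0,1]}(y)=\min\{1,\max\{0,y\}\}$, $x_{\rm ave}(t)=\frac1n\sum_ix_i(t)$. Control protocol (C3): $x_i(t+1)=\Pi_{[0,1]}\big(\omega_ix_{\rm ave}(t)+\frac{1-\omega_i}{|\mathcal N_i(t)|}\sum_{j\in\mathcal N_i(t)}x_j(t)+u_i(t)+b_i(t)\big)$, where $\delta_i(t)\in(0,\eta)$ is a chosen parameter, $u_i(t)\in[-\eta+\delta_i(t),\eta-\delta_i(t)]$ a chosen control input, $b_i(t)\in[-\delta_i(t),\delta_i(t)]$ an arbitrary uncertainty; $\delta_i(t),u_i(t)$ may depend on $x(0),\dots,x(t)$. A set $S\subseteq[0,1]^n$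 is finite-time robustly reachable from $[0,1]^n$ under the protocol if there exist constants $T>0$ and $\varepsilon'\in(0,\eta)$, independent of $x(0)$, such that for every $x(0)\in[0,1]^n$, either $x(0)\in S$, or one can choose $\delta_i(t)\in[\varepsilon',\eta)$ and $u_i(t)\in[-\eta+\delta_i(t),\eta-\delta_i(t)]$ for $i\in\mathcal V$, $0\le t<T$, guaranteeing that for arbitrary $b_i(t)\in[-\delta_i(t),\delta_i(t)]$ there is $t\in[1,T]$ with $x(t)\in S$. *)

(* Defs.v *)
(* classical reals. Agents are indexed by nat, agent set V = {0,...,n-1}. *)
From Stdlib Require Import Reals Lra Lia Arith.
Open Scope R_scope.

Fixpoint sumR (n : nat) (f : nat -> R) : R :=
  match n with O => 0 | S k => sumR k f + f k end.

Fixpoint omin (n : nat) (P : nat -> bool) (f : nat -> R) : option R :=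
  match n with
  | O => None
  | S k => let m := omin k P f in
           if P k then Some (match m with None => f k | Some v => Rmin v (f k) end)
           else m
  end.

Fixpoint omax (n : nat) (f : nat -> R) : option R :=
  match n with
  | O => None
  | S k => Some (match omax k f with None => f k | Some v => Rmax v (f k) end)
  end.

Definition min_over (n : nat) (P : nat -> bool) (f : nat -> R) : R :=
  match omin n P f with Some v => v | None => 0 end.

Definition max_over (n : nat) (f : nat -> R) : R :=
  match omax n f with Some v => v | None => 0 end.

Definition r_min (n : nat) (r : nat -> R) : R := min_over n (fun _ => true) r.

Definition omega_low (n : nat) (r omega : nat -> R) (eta : R) : R :=
  min_over n (fun i => if Rlt_dec (r i) (2 * eta) then true else false) omega.

Definition c_eps (n : nat) (r omega : nat -> R) (eta eps : R) : R :=
  Rmin (Rmin (INR n * eta / ((INR n - 1) * omega_low n r omega eta) - eps)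
             (INR n * eta - eps)) 1.

Definition in_cube (n : nat) (x : nat -> R) : Prop :=
  forall i, (i < n)%nat -> 0 <= x i <= 1.

Definition spread (n : nat) (x : nat -> R) : R :=
  max_over n (fun i => max_over n (fun j => Rabs (x i - x j))).

Definition E_set (n : nat) (c : R) (x : nat -> R) : Prop :=
  in_cube n x /\ spread n x >= c.

Definition proj01 (y : R) : R := Rmin 1 (Rmax 0 y).

Definition nbr_ind (r : nat -> R) (i : nat) (x : nat -> R) (j : nat) : R :=
  if Rle_dec (Rabs (x j - x i)) (r i) then 1 else 0.

Definition nbr_card (n : nat) (r : nat -> R) (x : nat -> R) (i : nat) : R :=
  sumR n (nbr_ind r i x).

Definition nbr_sum (n : nat) (r : nat -> R) (x : nat -> R) (i : nat) : R :=
  sumR n (fun j => nbr_ind r i x j * x j).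

Definition x_ave (n : nat) (x : nat -> R) : R := sumR n x / INR n.

(* control protocol (C3): value of x_i(t+1) given x = x(t), inputs u, uncertainty b *)
Definition C3_update (n : nat) (r omega : nat -> R) (x u b : nat -> R) (i : nat) : R :=
  proj01 (omega i * x_ave n x
          + (1 - omega i) / nbr_card n r x i * nbr_sum n r x i
          + u i + b i).

(* the history x(0),...,x(t) (components of agents in V), everything else masked *)
Definition history (n t : nat) (x : nat -> nat -> R) : nat -> nat -> R :=
  fun s j => if andb (Nat.leb s t) (Nat.ltb j n) then x s j else 0.

(* A strategy is a pair of causal policies delta, u : time -> history -> agent -> R.
   "For arbitrary b" is expressed as: every trajectory that is consistent with the
   protocol for some admissible b at each step reaches Sset within [1,T]. *)
Definition robustly_reachable (n : nat) (r omega : nat -> R) (eta : R)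
    (Sset : (nat -> R) -> Prop) : Prop :=
  exists (T : nat) (eps' : R), (0 < T)%nat /\ 0 < eps' < eta /\
  forall x0 : nat -> R, in_cube n x0 ->
    Sset x0 \/
    exists delta u : nat -> (nat -> nat -> R) -> nat -> R,
      (forall t h i, (t < T)%nat -> (i < n)%nat ->
         eps' <= delta t h i < eta /\
         - eta + delta t h i <= u t h i <= eta - delta t h i) /\
      forall x : nat -> nat -> R,
        (forall i, (i < n)%nat -> x O i = x0 i) ->
        (forall t, (t < T)%nat ->
           exists b : nat -> R,
             (forall i, (i < n)%nat ->
                - delta t (history n t x) i <= b i <= delta t (history n t x) i) /\
             (forall i, (i < n)%nat ->
                x (S t) i = C3_update n r omega (x t) (u t (history n t x)) b i)) ->
        exists t, (1 <= t <= T)%nat /\ Sset (x t).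

(* Main.v *)
Require Import Defs.
From Stdlib Require Import Reals Lra Lia Arith Classical.
Open Scope R_scope.

Lemma sumR_le n F G : (forall j, (j < n)%nat -> F j <= G j) -> sumR n F <= sumR n G.
Proof. induction n; simpl; intros H; [lra|]. pose proof (H n (Nat.lt_succ_diag_r n)).
  assert (sumR n F <= sumR n G) by (apply IHn; intros; apply H; lia). lra. Qed.

Lemma sumR_ext n F G : (forall j, (j < n)%nat -> F j = G j) -> sumR n F = sumR n G.
Proof. induction n; simpl; intros H; [lra|]. rewrite (H n) by lia. rewrite IHn by (intros; apply H; lia). lra. Qed.

Lemma sumR_scal n c F : sumR n (fun j => c * F j) = c * sumR n F.
Proof. induction n; simpl; [ring|]. rewrite IHn; ring. Qed.

Lemma sumR_const n c : sumR n (fun _ => c) = INR n * c.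
Proof. induction n; [simpl; ring|]. cbn [sumR]. rewrite IHn, S_INR. ring. Qed.

Lemma sumR_nonneg n F : (forall j, (j < n)%nat -> 0 <= F j) -> 0 <= sumR n F.
Proof. intros H. replace 0 with (sumR n (fun _ => 0)). apply sumR_le; auto.
  rewrite sumR_const; ring. Qed.

Lemma sumR_ge_term n F k : (forall j, (j < n)%nat -> 0 <= F j) -> (k < n)%nat -> F k <= sumR n F.
Proof. induction n; intros H Hk; [lia|]. simpl.
  destruct (Nat.eq_dec k n) as [->|Hne].
  - assert (0 <= sumR n F) by (apply sumR_nonneg; intros; apply H; lia). lra.
  - assert (F k <= sumR n F) by (apply IHn; [intros; apply H; lia| lia]).
    pose proof (H n (Nat.lt_succ_diag_r n)). lra. Qed.

Lemma sumR_special n F G k : (forall j, (j < n)%nat -> j <> k -> F j <= G j) -> (k < n)%nat ->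
  sumR n F <= sumR n G + (F k - G k).
Proof. induction n; intros H Hk; [lia|]. simpl.
  destruct (Nat.eq_dec k n) as [->|Hne].
  - assert (sumR n F <= sumR n G) by (apply sumR_le; intros; apply H; lia). lra.
  - assert (sumR n F <= sumR n G + (F k - G k)) by (apply IHn; [intros; apply H; lia| lia]).
    pose proof (H n (Nat.lt_succ_diag_r n) (not_eq_sym Hne)). lra. Qed.

Lemma sumR_single n F k : (forall j, (j < n)%nat -> j <> k -> F j = 0) -> (k < n)%nat ->
  sumR n F = F k.
Proof. intros H Hk. apply Rle_antisym.
  - pose proof (sumR_special n F (fun _ => 0) k) as S. rewrite sumR_const in S.
    assert (sumR n F <= INR n * 0 + (F k - 0)) by (apply S; auto; intros; rewrite H; auto; lra). lra.
  - pose proof (sumR_special n (fun _ => 0) F k) as S. rewrite sumR_const in S.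
    assert (INR n * 0 <= sumR n F + (0 - F k)) by (apply S; auto; intros; rewrite H; auto; lra). lra.
Qed.

Lemma omin_some n P f v : omin n P f = Some v -> exists k, (k < n)%nat /\ P k = true /\ v = f k.
Proof. revert v; induction n; simpl; intros v H; [discriminate|].
  destruct (P n) eqn:HP.
  - destruct (omin n P f) as [w|] eqn:Hw; inversion H; subst.
    + destruct (IHn w eq_refl) as (k & Hk & Pk & ->).
      destruct (Rle_dec (f k) (f n)).
      * exists k; split; [lia|split;auto]. rewrite Rmin_left; auto.
      * exists n; split; [lia|split;auto]. rewrite Rmin_right; auto; lra.
    + exists n; repeat split; auto.
  - destruct (IHn v H) as (k & ? & ? & ?); exists k; repeat split; auto; lia.
Qed.

Lemma omin_exists n P f : (exists i, (i < n)%nat /\ P i = true) -> exists v, omin n P f = Some v.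
Proof. induction n; simpl; intros [i [Hi Pi]]; [lia|].
  destruct (P n) eqn:HP; [eauto|]. apply IHn. exists i; split; auto.
  destruct (Nat.eq_dec i n); [subst; congruence| lia]. Qed.

Lemma omin_min n P f v : omin n P f = Some v -> forall i, (i < n)%nat -> P i = true -> v <= f i.
Proof. revert v; induction n; simpl; intros v H i Hi Pi; [lia|].
  destruct (P n) eqn:HP.
  - destruct (omin n P f) as [w|] eqn:Hw; inversion H; subst.
    + destruct (Nat.eq_dec i n) as [->|]. apply Rmin_r.
      eapply Rle_trans. apply Rmin_l. apply IHn; auto; lia.
    + destruct (Nat.eq_dec i n) as [->|]. lra.
      destruct (omin_exists n P f) as [w Hw']. exists i; split; auto; lia. congruence.
  - destruct (Nat.eq_dec i n) as [->|]. congruence. apply IHn; auto; lia.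
Qed.

Lemma max_over_ge n f i : (i < n)%nat -> f i <= max_over n f.
Proof. unfold max_over. revert i; induction n; intros i Hi; [lia|]. simpl.
  destruct (Nat.eq_dec i n) as [->|Hne].
  - destruct (omax n f); [apply Rmax_r| lra].
  - specialize (IHn i ltac:(lia)). destruct (omax n f) eqn:E.
    + eapply Rle_trans; [exact IHn| apply Rmax_l].
    + destruct n; [lia|]. simpl in E. discriminate.
Qed.

Definition base n r (omega : nat -> R) x i :=
  omega i * x_ave n x + (1 - omega i) / nbr_card n r x i * nbr_sum n r x i.

Lemma C3_base n r omega x u b i : C3_update n r omega x u b i = proj01 (base n r omega x i + u i + b i).
Proof. reflexivity. Qed.

Lemma proj_range y : 0 <= proj01 y <= 1.
Proof. unfold proj01, Rmin, Rmax. repeat destruct Rle_dec; lra. Qed.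
Lemma proj_ge y m : m <= y -> m <= 1 -> m <= proj01 y.
Proof. unfold proj01, Rmin, Rmax. repeat destruct Rle_dec; lra. Qed.
Lemma proj_le y m : y <= m -> 0 <= m -> proj01 y <= m.
Proof. unfold proj01, Rmin, Rmax. repeat destruct Rle_dec; lra. Qed.
Lemma proj_1 y : 1 <= y -> proj01 y = 1.
Proof. unfold proj01, Rmin, Rmax. repeat destruct Rle_dec; lra. Qed.
Lemma proj_0 y : y <= 0 -> proj01 y = 0.
Proof. unfold proj01, Rmin, Rmax. repeat destruct Rle_dec; lra. Qed.

Lemma ind_range r i x j : 0 <= nbr_ind r i x j <= 1.
Proof. unfold nbr_ind; destruct Rle_dec; lra. Qed.

Lemma card_ge1 n r x i : (i < n)%nat -> 0 <= r i -> 1 <= nbr_card n r x i.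
Proof. intros Hi Hr. unfold nbr_card.
  assert (nbr_ind r i x i = 1) as E.
  { unfold nbr_ind. destruct Rle_dec as [|n0]; auto. exfalso; apply n0.
    replace (x i - x i) with 0 by ring. rewrite Rabs_R0; lra. }
  rewrite <- E. apply sumR_ge_term; auto. intros; apply ind_range. Qed.

Lemma xave_le n x M : (0 < n)%nat -> (forall j, (j < n)%nat -> x j <= M) -> x_ave n x <= M.
Proof. intros Hn H. unfold x_ave. assert (0 < INR n) by (apply lt_0_INR; lia).
  assert (sumR n x <= INR n * M) by (rewrite <- sumR_const; apply sumR_le; auto).
  apply Rmult_le_reg_r with (INR n); auto. field_simplify; lra. Qed.

Lemma xave_ge n x M : (0 < n)%nat -> (forall j, (j < n)%nat -> M <= x j) -> M <= x_ave n x.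
Proof. intros Hn H. unfold x_ave. assert (0 < INR n) by (apply lt_0_INR; lia).
  assert (INR n * M <= sumR n x) by (rewrite <- sumR_const; apply sumR_le; auto).
  apply Rmult_le_reg_r with (INR n); auto. field_simplify; lra. Qed.

Lemma loc_le n r x i M : (i < n)%nat -> 0 <= r i -> (forall j, (j < n)%nat -> x j <= M) ->
  nbr_sum n r x i / nbr_card n r x i <= M.
Proof. intros Hi Hr H. pose proof (card_ge1 n r x i Hi Hr).
  assert (nbr_sum n r x i <= M * nbr_card n r x i).
  { unfold nbr_sum, nbr_card. rewrite <- sumR_scal. apply sumR_le. intros j Hj.
    pose proof (ind_range r i x j). pose proof (H j Hj). nra. }
  apply Rmult_le_reg_r with (nbr_card n r x i); [lra|]. field_simplify; lra. Qed.

Lemma loc_ge n r x i M : (i < n)%nat -> 0 <= r i -> (forall j, (j < n)%nat -> M <= x j) ->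
  M <= nbr_sum n r x i / nbr_card n r x i.
Proof. intros Hi Hr H. pose proof (card_ge1 n r x i Hi Hr).
  assert (M * nbr_card n r x i <= nbr_sum n r x i).
  { unfold nbr_sum, nbr_card. rewrite <- sumR_scal. apply sumR_le. intros j Hj.
    pose proof (ind_range r i x j). pose proof (H j Hj). nra. }
  apply Rmult_le_reg_r with (nbr_card n r x i); [lra|]. field_simplify; lra. Qed.

Lemma base_split n r omega x i : (i < n)%nat -> 0 <= r i ->
  base n r omega x i = omega i * x_ave n x + (1 - omega i) * (nbr_sum n r x i / nbr_card n r x i).
Proof. intros Hi Hr. pose proof (card_ge1 n r x i Hi Hr). unfold base. field. lra. Qed.

Lemma base_le n r omega x i M : (i < n)%nat -> 0 <= r i -> 0 < omega i < 1 ->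
  (forall j, (j < n)%nat -> x j <= M) -> base n r omega x i <= M.
Proof. intros Hi Hr Ho H. rewrite base_split by auto.
  pose proof (xave_le n x M ltac:(lia) H). pose proof (loc_le n r x i M Hi Hr H).
  assert (omega i * x_ave n x <= omega i * M) by (apply Rmult_le_compat_l; lra).
  assert ((1 - omega i) * (nbr_sum n r x i / nbr_card n r x i) <= (1 - omega i) * M) by (apply Rmult_le_compat_l; lra).
  lra. Qed.

Lemma base_ge n r omega x i M : (i < n)%nat -> 0 <= r i -> 0 < omega i < 1 ->
  (forall j, (j < n)%nat -> M <= x j) -> M <= base n r omega x i.
Proof. intros Hi Hr Ho H. rewrite base_split by auto.
  pose proof (xave_ge n x M ltac:(lia) H). pose proof (loc_ge n r x i M Hi Hr H).
  assert (omega i * M <= omega i * x_ave n x) by (apply Rmult_le_compat_l; lra).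
  assert ((1 - omega i) * M <= (1 - omega i) * (nbr_sum n r x i / nbr_card n r x i)) by (apply Rmult_le_compat_l; lra).
  lra. Qed.

Lemma spread_ge n x i j : (i < n)%nat -> (j < n)%nat -> Rabs (x i - x j) <= spread n x.
Proof. intros Hi Hj. unfold spread.
  eapply Rle_trans; [| apply (max_over_ge _ _ i Hi)].
  apply (max_over_ge _ (fun j => Rabs (x i - x j)) j Hj). Qed.

Lemma baseC_other n r omega x k j Z y : (k < n)%nat -> (j < n)%nat -> j <> k ->
  (forall i, (i < n)%nat -> i <> k -> 0 <= x i <= Z) -> x k = y -> Z <= y -> Z <= r j ->
  0 < omega j < 1 -> base n r omega x j <= Z + (y - Z) / INR n.
Proof. intros Hk Hj Hjk H Hy HZy HZr Ho. assert (0 <= r j) by (pose proof (H j Hj Hjk); lra).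
  assert (0 < INR n) by (apply lt_0_INR; lia).
  assert (Hs : sumR n x <= INR n * Z + (y - Z)).
  { rewrite <- sumR_const. rewrite <- Hy. apply sumR_special; auto. intros i Hi Hik. apply H; auto. }
  assert (Ha : x_ave n x <= Z + (y - Z) / INR n).
  { unfold x_ave. apply Rmult_le_reg_r with (INR n); auto. field_simplify; try lra. }
  assert (HL : nbr_sum n r x j / nbr_card n r x j <= Z + (y - Z) / INR n).
  { destruct (Rle_dec (Rabs (x k - x j)) (r j)) as [Hin|Hout].
    - assert (Hall : forall i, (i < n)%nat -> nbr_ind r j x i = 1).
      { intros i Hi. unfold nbr_ind. destruct Rle_dec as [|nn]; auto. exfalso.
        destruct (Nat.eq_dec i k) as [->|]; [tauto|]. apply nn.
        pose proof (H i Hi n0). pose proof (H j Hj Hjk). apply Rabs_le. lra. }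
      assert (Hc : nbr_card n r x j = INR n).
      { unfold nbr_card. rewrite (sumR_ext _ _ (fun _ => 1)) by auto. rewrite sumR_const; ring. }
      assert (Hsum : nbr_sum n r x j = sumR n x).
      { unfold nbr_sum. apply sumR_ext. intros i Hi; rewrite Hall; auto; ring. }
      rewrite Hc, Hsum. apply Rmult_le_reg_r with (INR n); auto. field_simplify; lra.
    - assert (Hk0 : nbr_ind r j x k = 0) by (unfold nbr_ind; destruct Rle_dec; tauto).
      assert (Z <= Z + (y - Z) / INR n) by (assert (0 <= (y - Z) / INR n) by (apply Rmult_le_pos; [lra| left; apply Rinv_0_lt_compat; lra]); lra).
      eapply Rle_trans; [|eassumption].
      pose proof (card_ge1 n r x j Hj ltac:(lra)).
      assert (nbr_sum n r x j <= Z * nbr_card n r x j).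
      { unfold nbr_sum, nbr_card. rewrite <- sumR_scal. apply sumR_le. intros i Hi.
        pose proof (ind_range r j x i).
        destruct (Nat.eq_dec i k) as [->|Hik]. rewrite Hk0. pose proof (H j Hj Hjk). lra.
        pose proof (H i Hi Hik). nra. }
      apply Rmult_le_reg_r with (nbr_card n r x j); [lra|]. field_simplify; lra. }
  rewrite base_split by (auto; lra).
  assert (omega j * x_ave n x <= omega j * (Z + (y - Z) / INR n)) by (apply Rmult_le_compat_l; lra).
  assert ((1 - omega j) * (nbr_sum n r x j / nbr_card n r x j) <= (1 - omega j) * (Z + (y - Z) / INR n)) by (apply Rmult_le_compat_l; lra).
  lra. Qed.

Lemma baseC_k n r omega x k : (k < n)%nat ->
  (forall i, (i < n)%nat -> i <> k -> 0 <= x i /\ r k < x k - x i) -> 0 <= x k -> 0 <= r k ->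
  0 < omega k < 1 -> omega k * (x k / INR n) + (1 - omega k) * x k <= base n r omega x k.
Proof. intros Hk H Hx0 Hr Ho. assert (0 < INR n) by (apply lt_0_INR; lia).
  assert (HL : nbr_sum n r x k / nbr_card n r x k = x k).
  { assert (Hc : nbr_card n r x k = 1).
    { unfold nbr_card. rewrite (sumR_single _ _ k); auto.
      unfold nbr_ind. destruct Rle_dec as [|nn]; auto. exfalso; apply nn.
      replace (x k - x k) with 0 by ring. rewrite Rabs_R0; lra.
      intros j Hj Hjk. unfold nbr_ind. destruct Rle_dec as [r0|]; auto. exfalso.
      destruct (H j Hj Hjk). rewrite Rabs_left1 in r0; lra. }
    assert (Hs : nbr_sum n r x k = x k).
    { unfold nbr_sum. rewrite (sumR_single _ _ k); auto.
      unfold nbr_ind. destruct Rle_dec as [|nn]; [ring|]. exfalso; apply nn.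
      replace (x k - x k) with 0 by ring. rewrite Rabs_R0; lra.
      intros j Hj Hjk. unfold nbr_ind. destruct Rle_dec as [r0|]; [|ring]. exfalso.
      destruct (H j Hj Hjk). rewrite Rabs_left1 in r0; lra. }
    rewrite Hc, Hs; field. }
  assert (Ha : x k / INR n <= x_ave n x).
  { unfold x_ave. apply Rmult_le_compat_r. left; apply Rinv_0_lt_compat; auto.
    apply sumR_ge_term; auto. intros j Hj. destruct (Nat.eq_dec j k) as [->|]; auto. apply H; auto. }
  rewrite base_split by auto. rewrite HL.
  assert (omega k * (x k / INR n) <= omega k * x_ave n x) by (apply Rmult_le_compat_l; lra).
  lra. Qed.

Definition Steps n r omega (T : nat) (dl : R) (U : nat -> nat -> R) (x : nat -> nat -> R) :=
  forall t, (t < T)%nat -> exists b : nat -> R,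
    (forall i, (i < n)%nat -> - dl <= b i <= dl) /\
    (forall i, (i < n)%nat -> x (S t) i = C3_update n r omega (x t) (U t) b i).

Lemma stepb n r omega T dl U x t i : Steps n r omega T dl U x -> (t < T)%nat -> (i < n)%nat ->
  exists bi, - dl <= bi <= dl /\ x (S t) i = proj01 (base n r omega (x t) i + U t i + bi).
Proof. intros HS Ht Hi. destruct (HS t Ht) as [b [Hb Hx]]. exists (b i); split; auto.
  Qed.

Lemma cube_after n r omega T dl U x t i : Steps n r omega T dl U x -> (t < T)%nat -> (i < n)%nat ->
  0 <= x (S t) i <= 1.
Proof. intros HS Ht Hi. destruct (stepb _ _ _ _ _ _ _ t i HS Ht Hi) as [b [_ ->]]. apply proj_range. Qed.

Lemma archi a : 0 < a -> exists N : nat, (1 <= N)%nat /\ 1 <= INR N * a.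
Proof. intros Ha. destruct (archimed_cor1 a Ha) as [N [H1 H2]]. exists N; split; [lia|].
  assert (0 < INR N) by (apply lt_0_INR; lia).
  apply Rmult_lt_compat_l with (r := INR N) in H1; auto. rewrite Rinv_r in H1; lra. Qed.

Lemma phaseA n r omega eta T dl U x NA :
  (3 <= n)%nat -> (forall i, (i < n)%nat -> 0 < r i <= 1) -> (forall i, (i < n)%nat -> 0 < omega i < 1) ->
  0 < eta - 2 * dl -> Steps n r omega T dl U x -> (NA <= T)%nat ->
  (forall t i, (t < NA)%nat -> U t i = - (eta - dl)) -> in_cube n (x O) ->
  forall s, (s <= NA)%nat -> forall i, (i < n)%nat -> x s i <= Rmax 0 (1 - INR s * (eta - 2 * dl)).
Proof. intros Hn Hr Ho Hed HS HNA HU Hx0. induction s; intros Hs i Hi.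
  - simpl. destruct (Hx0 i Hi). rewrite Rmult_0_l, Rminus_0_r. eapply Rle_trans; [|apply Rmax_r]. lra.
  - destruct (stepb _ _ _ _ _ _ _ s i HS ltac:(lia) Hi) as [b [Hb ->]].
    set (M := Rmax 0 (1 - INR s * (eta - 2 * dl))).
    assert (base n r omega (x s) i <= M).
    { apply base_le; auto. specialize (Hr i Hi); lra. intros j Hj; apply IHs; auto; lia. }
    rewrite HU by lia. apply proj_le; [| apply Rmax_l].
    rewrite S_INR. unfold M, Rmax in *. repeat destruct Rle_dec; nra.
Qed.

Lemma phaseA0 n r omega eta T dl U x NA :
  (3 <= n)%nat -> (forall i, (i < n)%nat -> 0 < r i <= 1) -> (forall i, (i < n)%nat -> 0 < omega i < 1) ->
  0 < eta - 2 * dl -> Steps n r omega T dl U x -> (NA <= T)%nat -> (1 <= NA)%nat ->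
  1 <= INR NA * (eta - 2 * dl) ->
  (forall t i, (t < NA)%nat -> U t i = - (eta - dl)) -> in_cube n (x O) ->
  forall i, (i < n)%nat -> x NA i = 0.
Proof. intros Hn Hr Ho Hed HS HNA HNA1 HN HU Hx0 i Hi.
  pose proof (phaseA n r omega eta T dl U x NA Hn Hr Ho Hed HS HNA HU Hx0 NA (le_n _) i Hi).
  destruct NA as [|NA']; [lia|].
  pose proof (cube_after _ _ _ _ _ _ _ NA' i HS ltac:(lia) Hi).
  rewrite Rmax_left in H by lra. lra. Qed.

Lemma bigfinal n r omega eta T dl U x NA :
  (3 <= n)%nat -> (forall i, (i < n)%nat -> 0 < r i <= 1) -> (forall i, (i < n)%nat -> 0 < omega i < 1) ->
  0 < dl <= 1/4 -> 1/2 + 3 * dl <= eta -> Steps n r omega T dl U x -> (NA + 2 <= T)%nat ->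
  (forall i, (i < n)%nat -> x NA i = 0) ->
  (forall i, (i < n)%nat -> U NA i = 1/2) -> U (S NA) 0%nat = eta - dl -> U (S NA) 1%nat = - (eta - dl) ->
  x (S (S NA)) 0%nat = 1 /\ x (S (S NA)) 1%nat = 0.
Proof. intros Hn Hr Ho Hd He HS HT H0 HU1 HUa HUb.
  assert (Hmid : forall i, (i < n)%nat -> 1/2 - dl <= x (S NA) i <= 1/2 + dl).
  { intros i Hi. destruct (stepb _ _ _ _ _ _ _ NA i HS ltac:(lia) Hi) as [b [Hb ->]].
    assert (base n r omega (x NA) i <= 0) by (apply base_le; auto; [specialize (Hr i Hi); lra| intros; rewrite H0; auto; lra]).
    assert (0 <= base n r omega (x NA) i) by (apply base_ge; auto; [specialize (Hr i Hi); lra| intros; rewrite H0; auto; lra]).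
    rewrite HU1 by auto. split; [apply proj_ge| apply proj_le]; lra. }
  split.
  - destruct (stepb _ _ _ _ _ _ _ (S NA) 0%nat HS ltac:(lia) ltac:(lia)) as [b [Hb ->]].
    assert (1/2 - dl <= base n r omega (x (S NA)) 0%nat) by (apply base_ge; auto; [lia| specialize (Hr 0%nat ltac:(lia)); lra| apply Ho; lia| intros; apply Hmid; auto]).
    apply proj_1. lra.
  - destruct (stepb _ _ _ _ _ _ _ (S NA) 1%nat HS ltac:(lia) ltac:(lia)) as [b [Hb ->]].
    assert (base n r omega (x (S NA)) 1%nat <= 1/2 + dl) by (apply base_le; auto; [lia| specialize (Hr 1%nat ltac:(lia)); lra| apply Ho; lia| intros; apply Hmid; auto]).
    apply proj_0. lra.
Qed.

Lemma smallB n r omega eta T dl U x NA k :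
  (3 <= n)%nat -> (forall i, (i < n)%nat -> 0 < r i <= 1) -> (forall i, (i < n)%nat -> 0 < omega i < 1) ->
  0 < dl -> 2 * dl <= eta -> eta <= 1/2 -> Steps n r omega T dl U x -> (NA + 2 <= T)%nat -> (k < n)%nat ->
  (forall i, (i < n)%nat -> x NA i = 0) ->
  (forall i, (i < n)%nat -> U NA i = eta - dl) -> U (S NA) k = eta - dl ->
  (forall i, i <> k -> U (S NA) i = - (eta - dl)) ->
  2 * eta - 4 * dl <= x (S (S NA)) k /\ forall i, (i < n)%nat -> i <> k -> x (S (S NA)) i <= 2 * dl.
Proof. intros Hn Hr Ho Hd He He2 HS HT Hk H0 HU1 HUa HUb.
  assert (Hmid : forall i, (i < n)%nat -> eta - 2 * dl <= x (S NA) i <= eta).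
  { intros i Hi. destruct (stepb _ _ _ _ _ _ _ NA i HS ltac:(lia) Hi) as [b [Hb ->]].
    assert (base n r omega (x NA) i <= 0) by (apply base_le; auto; [specialize (Hr i Hi); lra| intros; rewrite H0; auto; lra]).
    assert (0 <= base n r omega (x NA) i) by (apply base_ge; auto; [specialize (Hr i Hi); lra| intros; rewrite H0; auto; lra]).
    rewrite HU1 by auto. split; [apply proj_ge| apply proj_le]; lra. }
  split.
  - destruct (stepb _ _ _ _ _ _ _ (S NA) k HS ltac:(lia) Hk) as [b [Hb ->]].
    assert (eta - 2 * dl <= base n r omega (x (S NA)) k) by (apply base_ge; auto; [specialize (Hr k Hk); lra| intros; apply Hmid; auto]).
    apply proj_ge; lra.
  - intros i Hi Hik. destruct (stepb _ _ _ _ _ _ _ (S NA) i HS ltac:(lia) Hi) as [b [Hb ->]].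
    assert (base n r omega (x (S NA)) i <= eta) by (apply base_le; auto; [specialize (Hr i Hi); lra| intros; apply Hmid; auto]).
    rewrite HUb by auto. apply proj_le; lra.
Qed.

Lemma phaseC n r omega eta T dl U x k j0 t0 NC c beta g gam :
  (3 <= n)%nat -> (forall i, (i < n)%nat -> 0 < r i <= 1) -> (forall i, (i < n)%nat -> 0 < omega i < 1) ->
  (k < n)%nat -> (j0 < n)%nat -> j0 <> k ->
  Steps n r omega T dl U x -> (t0 + NC <= T)%nat -> (1 <= t0)%nat ->
  (forall t, (t0 <= t)%nat -> U t k = eta - dl) ->
  (forall t i, (t0 <= t)%nat -> i <> k -> U t i = - (eta - dl)) ->
  (forall s, (s < NC)%nat -> spread n (x (t0 + s)%nat) < c) ->
  2 * eta - 4 * dl <= x t0 k -> (forall i, (i < n)%nat -> i <> k -> x t0 i <= 2 * dl) ->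
  0 < dl -> c > 2 * eta - 6 * dl -> r k <= 2 * eta - 8 * dl -> 8 * dl <= 2 * eta ->
  (forall j, (j < n)%nat -> 2 * dl <= r j) -> c <= 1 ->
  0 < beta < 1 -> (forall y, omega k * (y / INR n) + (1 - omega k) * y = (1 - beta) * y) ->
  beta * c <= eta - 2 * g -> 2 * dl <= g -> 0 < g ->
  (forall w, w < c -> w / INR n < eta - 2 * gam) -> 2 * dl <= gam -> 0 < gam ->
  forall s, (s <= NC)%nat ->
    Rmin c (2 * eta - 4 * dl + INR s * g) <= x (t0 + s)%nat k /\
    forall i, (i < n)%nat -> i <> k -> x (t0 + s)%nat i <= Rmax 0 (2 * dl - INR s * gam).
Proof. intros Hn Hr Ho Hk Hj0 Hj0k HS HT Ht0 HUk HUo Hsp Hy0 Hz0 Hd Hc Hrk Hde Hrj Hc1 Hb Hbe Hbc Hg Hg0 Hw Hgam Hgam0.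
  assert (Hnn : 0 < INR n) by (apply lt_0_INR; lia).
  assert (Hcube : forall s i, (s <= NC)%nat -> (i < n)%nat -> 0 <= x (t0 + s)%nat i <= 1).
  { intros s i Hs Hi. replace (t0 + s)%nat with (S (t0 - 1 + s)) by lia. apply (cube_after n r omega T dl U x); auto; lia. }
  induction s; intros Hs.
  - rewrite Nat.add_0_r. simpl INR. rewrite !Rmult_0_l, Rplus_0_r, Rminus_0_r. split.
    + eapply Rle_trans; [apply Rmin_r| auto].
    + intros i Hi Hik. eapply Rle_trans; [apply Hz0; auto| apply Rmax_r].
  - destruct (IHs ltac:(lia)) as [IHy IHz].
    set (t := (t0 + s)%nat). set (Z := Rmax 0 (2 * dl - INR s * gam)).
    set (l := Rmin c (2 * eta - 4 * dl + INR s * g)).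
    assert (HZ0 : 0 <= Z) by apply Rmax_l.
    assert (HZ2 : Z <= 2 * dl).
    { unfold Z, Rmax. destruct Rle_dec; [|lra]. assert (0 <= INR s * gam) by (apply Rmult_le_pos; [apply pos_INR| lra]). lra. }
    assert (Hl : 2 * eta - 6 * dl < l).
    { unfold l. assert (0 <= INR s * g) by (apply Rmult_le_pos; [apply pos_INR| lra]).
      unfold Rmin; destruct Rle_dec; lra. }
    assert (Hlc : l <= c) by apply Rmin_l.
    assert (Hoth : forall i, (i < n)%nat -> i <> k -> 0 <= x t i <= Z).
    { intros i Hi Hik. split; [apply (Hcube s i); auto; lia| apply IHz; auto]. }
    assert (HyZc : (x t k) - Z < c).
    { pose proof (Hsp s ltac:(lia)) as Hsp'. pose proof (spread_ge n (x t) k j0 Hk Hj0) as Hsg.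
      pose proof (Rle_abs (x t k - x t j0)). pose proof (Hoth j0 Hj0 Hj0k). unfold t in *. lra. }
    assert (Hyl : l <= (x t k)) by exact IHy.
    replace (t0 + S s)%nat with (S t) by (unfold t; lia).
    split.
    + destruct (stepb _ _ _ _ _ _ _ t k HS ltac:(unfold t; lia) Hk) as [b [Hb' ->]].
      assert (Hbase : (1 - beta) * (x t k) <= base n r omega (x t) k).
      { rewrite <- Hbe. apply baseC_k; auto.
        - intros i Hi Hik. pose proof (Hoth i Hi Hik). split; [lra|]. lra.
        - lra.
        - specialize (Hr k Hk); lra. }
      rewrite HUk by (unfold t; lia).
      assert ((1 - beta) * l <= (1 - beta) * (x t k)) by (apply Rmult_le_compat_l; lra).
      assert (beta * l <= beta * c) by (apply Rmult_le_compat_l; lra).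
      apply proj_ge.
      * rewrite S_INR. unfold l, Rmin in *. repeat destruct Rle_dec; nra.
      * eapply Rle_trans; [apply Rmin_l| auto].
    + intros i Hi Hik. destruct (stepb _ _ _ _ _ _ _ t i HS ltac:(unfold t; lia) Hi) as [b [Hb' ->]].
      assert (Hbase : base n r omega (x t) i <= Z + ((x t k) - Z) / INR n).
      { apply baseC_other with k; auto.
        - lra.
        - specialize (Hrj i Hi). lra. }
      rewrite HUo by (unfold t; lia; auto). auto.
      pose proof (Hw ((x t k) - Z) HyZc).
      apply proj_le; [| apply Rmax_l].
      rewrite S_INR. unfold Z, Rmax in *. repeat destruct Rle_dec; nra.
Qed.

Lemma rmin_facts n r : (0 < n)%nat -> (forall i, (i < n)%nat -> 0 < r i <= 1) ->
  exists i0, (i0 < n)%nat /\ r_min n r = r i0 /\ forall j, (j < n)%nat -> r_min n r <= r j.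
Proof. intros Hn Hr. unfold r_min, min_over.
  destruct (omin_exists n (fun _ => true) r) as [v Hv]. exists 0%nat; auto.
  rewrite Hv. destruct (omin_some _ _ _ _ Hv) as (k & Hk & _ & ->). exists k; repeat split; auto.
  intros j Hj. apply (omin_min _ _ _ _ Hv); auto. Qed.

Lemma olow_facts n r omega eta i0 : (i0 < n)%nat -> r i0 < 2 * eta ->
  exists k, (k < n)%nat /\ r k < 2 * eta /\ omega_low n r omega eta = omega k.
Proof. intros Hi Hri. unfold omega_low, min_over.
  set (P := fun i => if Rlt_dec (r i) (2 * eta) then true else false).
  destruct (omin_exists n P omega) as [v Hv].
  { exists i0; split; auto. unfold P; destruct Rlt_dec; auto; lra. }
  rewrite Hv. destruct (omin_some _ _ _ _ Hv) as (k & Hk & Pk & ->). exists k; repeat split; auto.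
  unfold P in Pk. destruct Rlt_dec; auto; discriminate. Qed.

Theorem lemma5 (n : nat) (r omega : nat -> R) (eta : R) :
  (3 <= n)%nat ->
  (forall i, (i < n)%nat -> 0 < r i <= 1) ->
  (forall i, (i < n)%nat -> 0 < omega i < 1) ->
  0 < eta ->
  r_min n r < 1 ->
  eta > r_min n r / 2 ->
  forall eps : R, eps > 0 ->
    robustly_reachable n r omega eta (E_set n (c_eps n r omega eta eps)).
Proof.
  intros Hn Hr Ho Heta Hrm1 Hrm2 eps Heps.
  set (c := c_eps n r omega eta eps).
  assert (Hc1 : c <= 1) by apply Rmin_r.
  assert (Hc2 : c <= INR n * eta - eps) by (eapply Rle_trans; [apply Rmin_l| apply Rmin_r]).
  assert (Hc3 : c <= INR n * eta / ((INR n - 1) * omega_low n r omega eta) - eps)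
    by (eapply Rle_trans; [apply Rmin_l| apply Rmin_l]).
  assert (Hnn : 3 <= INR n) by (replace 3 with (INR 3) by (simpl; ring); apply le_INR; auto).
  destruct (Rlt_dec (1/2) eta) as [Hbig|Hsmall].
  -
    set (dl := Rmin (1/4) ((eta - 1/2) / 3)).
    assert (Hd1 : dl <= 1/4) by apply Rmin_l.
    assert (Hd2 : dl <= (eta - 1/2) / 3) by apply Rmin_r.
    assert (Hd0 : 0 < dl) by (unfold dl, Rmin; destruct Rle_dec; lra).
    destruct (archi (eta - 2 * dl) ltac:(lra)) as [NA [HNA1 HNA]].
    set (U := fun t i => if Nat.ltb t NA then - (eta - dl) else if Nat.eqb t NA then 1/2
                         else if Nat.eqb i 0 then eta - dl else if Nat.eqb i 1 then - (eta - dl) else 0).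
    exists (NA + 2)%nat, dl. split; [lia|]. split; [lra|].
    intros x0 Hx0. right. exists (fun _ _ _ => dl), (fun t _ i => U t i). split.
    { intros t h i Ht Hi. split; [lra|]. unfold U.
      destruct (Nat.ltb t NA); [lra|]. destruct (Nat.eqb t NA); [lra|].
      destruct (Nat.eqb i 0); [lra|]. destruct (Nat.eqb i 1); lra. }
    intros x Hxi HX.
    assert (HS : Steps n r omega (NA + 2) dl U x) by exact HX.
    assert (Hx0' : in_cube n (x O)) by (intros i Hi; rewrite Hxi; auto).
    assert (H0 : forall i, (i < n)%nat -> x NA i = 0).
    { apply (phaseA0 n r omega eta (NA + 2) dl U x NA); auto; try lra; try lia.
      intros t i Ht. unfold U. replace (Nat.ltb t NA) with true; auto. symmetry; apply Nat.ltb_lt; auto. }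
    assert (HUN : forall i, (i < n)%nat -> U NA i = 1/2).
    { intros i Hi. unfold U. rewrite Nat.ltb_irrefl, Nat.eqb_refl. auto. }
    assert (HUS : forall i, U (S NA) i = if Nat.eqb i 0 then eta - dl else if Nat.eqb i 1 then - (eta - dl) else 0).
    { intros i. unfold U. replace (Nat.ltb (S NA) NA) with false by (symmetry; apply Nat.ltb_ge; lia).
      replace (Nat.eqb (S NA) NA) with false by (symmetry; apply Nat.eqb_neq; lia). auto. }
    destruct (bigfinal n r omega eta (NA + 2) dl U x NA) as [E0 E1]; auto; try lra; try lia.
    exists (NA + 2)%nat. split; [lia|]. replace (NA + 2)%nat with (S (S NA)) by lia. split.
    + intros i Hi. apply (cube_after n r omega (NA + 2) dl U x); auto; lia.
    + pose proof (spread_ge n (x (S (S NA))) 0 1 ltac:(lia) ltac:(lia)).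
      rewrite E0, E1 in H. replace (1 - 0) with 1 in H by ring. rewrite Rabs_R1 in H. lra.
  -
    apply Rnot_lt_le in Hsmall.
    destruct (rmin_facts n r ltac:(lia) Hr) as (i0 & Hi0 & Hrho & Hrhomin).
    set (rho := r_min n r) in *.
    destruct (olow_facts n r omega eta i0 Hi0 ltac:(lra)) as (k & Hk & Hrk & Hol).
    rewrite Hol in Hc3.
    pose proof (Hr i0 Hi0) as Hri0. pose proof (Ho k Hk) as Hok. pose proof (Hr k Hk) as Hrkk.
    set (nn := INR n) in *. set (wk := omega k) in *.
    set (beta := wk * (nn - 1) / nn).
    assert (Hb : 0 < beta < 1).
    { unfold beta. split. apply Rmult_lt_0_compat. apply Rmult_lt_0_compat; lra. apply Rinv_0_lt_compat; lra.
      apply Rmult_lt_reg_r with nn; [lra|]. field_simplify; [|lra]. nra. }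
    set (g := beta * eps / 2). set (gam := eps / (2 * nn)).
    assert (Hg0 : 0 < g) by (unfold g; nra).
    assert (Hgam0 : 0 < gam) by (unfold gam; apply Rmult_lt_0_compat; [lra| apply Rinv_0_lt_compat; lra]).
    set (dl := Rmin (Rmin (eta/4) (gam/2)) (Rmin (g/2) (Rmin ((2*eta - r k)/9) (rho/2)))).
    assert (Hd1 : dl <= eta / 4) by (unfold dl; eapply Rle_trans; [apply Rmin_l| apply Rmin_l]).
    assert (Hd2 : dl <= gam / 2) by (unfold dl; eapply Rle_trans; [apply Rmin_l| apply Rmin_r]).
    assert (Hd3 : dl <= g / 2) by (unfold dl; eapply Rle_trans; [apply Rmin_r| apply Rmin_l]).
    assert (Hd4 : dl <= (2*eta - r k)/9) by (unfold dl; eapply Rle_trans; [apply Rmin_r| eapply Rle_trans; [apply Rmin_r| apply Rmin_l]]).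
    assert (Hd5 : dl <= rho/2) by (unfold dl; eapply Rle_trans; [apply Rmin_r| eapply Rle_trans; [apply Rmin_r| apply Rmin_r]]).
    assert (Hd0 : 0 < dl).
    { unfold dl. repeat (apply Rmin_glb_lt); lra. }
    destruct (archi (eta - 2 * dl) ltac:(lra)) as [NA [HNA1 HNA]].
    destruct (archi g Hg0) as [N1 [HN11 HN1]].
    destruct (archi gam Hgam0) as [N2 [HN21 HN2]].
    set (NC := (N1 + N2)%nat).
    set (U := fun t i => if Nat.ltb t NA then - (eta - dl) else if Nat.eqb t NA then eta - dl
                         else if Nat.eqb i k then eta - dl else - (eta - dl)).
    set (T := (NA + 2 + NC)%nat).
    exists T, dl. split; [unfold T; lia|]. split; [lra|].
    intros x0 Hx0. right. exists (fun _ _ _ => dl), (fun t _ i => U t i). split.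
    { intros t h i Ht Hi. split; [lra|]. unfold U.
      destruct (Nat.ltb t NA); [lra|]. destruct (Nat.eqb t NA); [lra|].
      destruct (Nat.eqb i k); lra. }
    intros x Hxi HX.
    assert (HS : Steps n r omega T dl U x) by exact HX.
    destruct (classic (exists t, (1 <= t <= T)%nat /\ E_set n c (x t))) as [Hdone|Hnot]; [exact Hdone|].
    exfalso.
    assert (Hsp : forall t, (1 <= t <= T)%nat -> spread n (x t) < c).
    { intros t Ht. destruct (Rlt_dec (spread n (x t)) c) as [|Hge]; auto. exfalso. apply Hnot.
      exists t; split; auto. split; [|lra]. intros i Hi. destruct t as [|t']; [lia|].
      apply (cube_after n r omega T dl U x); auto; lia. }
    assert (Hx0' : in_cube n (x O)) by (intros i Hi; rewrite Hxi; auto).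
    assert (H0 : forall i, (i < n)%nat -> x NA i = 0).
    { apply (phaseA0 n r omega eta T dl U x NA); auto; try lra; try (unfold T; lia).
      intros t i Ht. unfold U. replace (Nat.ltb t NA) with true; auto. symmetry; apply Nat.ltb_lt; auto. }
    assert (HUgt : forall t i, (S NA <= t)%nat -> U t i = if Nat.eqb i k then eta - dl else - (eta - dl)).
    { intros t i Ht. unfold U. replace (Nat.ltb t NA) with false by (symmetry; apply Nat.ltb_ge; lia).
      replace (Nat.eqb t NA) with false by (symmetry; apply Nat.eqb_neq; lia). auto. }
    destruct (smallB n r omega eta T dl U x NA k) as [Hy0 Hz0]; auto; try lra; try (unfold T; lia).
    { intros i Hi. unfold U. rewrite Nat.ltb_irrefl, Nat.eqb_refl. auto. }
    { rewrite HUgt by lia. rewrite Nat.eqb_refl. auto. }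
    { intros i Hik. rewrite HUgt by lia. replace (Nat.eqb i k) with false by (symmetry; apply Nat.eqb_neq; auto). auto. }
    assert (Hj : exists j0, (j0 < n)%nat /\ j0 <> k).
    { destruct (Nat.eq_dec k 0); [exists 1%nat| exists 0%nat]; split; lia. }
    destruct Hj as [j0 [Hj0 Hj0k]].
    assert (Hc : c > 2 * eta - 6 * dl).
    { pose proof (Hsp (S (S NA)) ltac:(unfold T; lia)).
      pose proof (spread_ge n (x (S (S NA))) k j0 Hk Hj0).
      pose proof (Rle_abs (x (S (S NA)) k - x (S (S NA)) j0)). pose proof (Hz0 j0 Hj0 Hj0k). lra. }
    assert (Hbc : beta * c <= eta - 2 * g).
    { assert (beta * c <= beta * (nn * eta / ((nn - 1) * wk) - eps)) by (apply Rmult_le_compat_l; lra).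
      replace (eta - 2 * g) with (beta * (nn * eta / ((nn - 1) * wk) - eps)); auto.
      unfold g, beta. field. split; lra. }
    destruct (phaseC n r omega eta T dl U x k j0 (S (S NA)) NC c beta g gam) with (s := NC)
      as [HyF HzF]; auto; try lra; try (unfold T; lia).
    { intros t Ht. rewrite HUgt by lia. rewrite Nat.eqb_refl. auto. }
    { intros t i Ht Hik. rewrite HUgt by lia. replace (Nat.eqb i k) with false by (symmetry; apply Nat.eqb_neq; auto). auto. }
    { intros s Hs. apply Hsp. unfold T; lia. }
    { intros j Hj. pose proof (Hrhomin j Hj). lra. }
    { intros y. fold wk nn. unfold beta. field. lra. }
    { intros w Hw. fold nn. unfold gam.
      assert (w / nn < c / nn) by (apply Rmult_lt_compat_r; [apply Rinv_0_lt_compat; lra| lra]).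
      assert (c / nn <= (nn * eta - eps) / nn) by (apply Rmult_le_compat_r; [left; apply Rinv_0_lt_compat; lra| lra]).
      replace (eta - 2 * (eps / (2 * nn))) with ((nn * eta - eps) / nn) by (field; lra). lra. }
    assert (HNC : 1 <= INR NC * g /\ 1 <= INR NC * gam).
    { unfold NC. rewrite plus_INR. pose proof (pos_INR N1). pose proof (pos_INR N2). split; nra. }
    rewrite Rmin_left in HyF by nra.
    assert (HzF' : x (S (S NA) + NC)%nat j0 = 0).
    { pose proof (HzF j0 Hj0 Hj0k). rewrite Rmax_left in H by lra.
      assert (0 <= x (S (S NA) + NC)%nat j0).
      { replace (S (S NA) + NC)%nat with (S (S NA + NC)) by lia.
        apply (cube_after n r omega T dl U x); auto; unfold T; lia. }
      lra. }
    pose proof (Hsp (S (S NA) + NC)%nat ltac:(unfold T; lia)).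
    pose proof (spread_ge n (x (S (S NA) + NC)%nat) k j0 Hk Hj0).
    pose proof (Rle_abs (x (S (S NA) + NC)%nat k - x (S (S NA) + NC)%nat j0)). lra.
Qed.
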